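(* Let $k_1,k_2,k_3\ge 1$ be integers and $G$ the grid graph with vertex set $\{0,\dots,k_1\}\times\{0,\dots,k_2\}\times\{0,\dots,k_3\}$, two vertices adjacent iff they differ by $1$ in exactly one coordinate. Let $\mathcal B=\{B_1,\dots,B_m\}$ be a family of boxes $B_i=[a_i',a_i'']\times[b_i',b_i'']\times[c_i',c_i'']\subseteq\mathbb R^3$ with integers $0\le a_i'<a_i''\le k_1$, $0\le b_i'<b_i''\le k_2$, $0\le c_i'<c_i''\le k_3$, and let $G_i$ be the subgraph of $G$ induced by the vertices of $G$ lying in $B_i$. Let $\widetilde G$ be the graph with vertex set $V(G)\cup\{(u,i):1\le i\le m,\ u\in V(G_i)\}$ whose edges are: all edges of $G$; for each $i$, the edges $(u,i)(w,i)$ for every edge $uw$ of $G_i$; and for each $i$ and each $u\in V(G_i)$, the edge $u\,(u,i)$. Then $\widetilde G$ is a median graph.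
   Context: A connected graph is median if for every three vertices $x,y,z$ the set $I(x,y)\cap I(y,z)\cap I(z,x)$ is a single vertex, where $I(u,v)=\{w: d(u,w)+d(w,v)=d(u,v)\}$ and $d$ is the shortest-path distance. (Geometrically, $\widetilde G$ is the 1-skeleton of the box complex obtained from the box $[0,k_1]\times[0,k_2]\times[0,k_3]$ subdivided into unit cells by attaching, for each $i$, the 4-dimensional box $B_i\times[0,1]$ along $B_i$ in a new, $i$-th, coordinate direction.) *)

(* Defs.v *)
From mathcomp Require Import all_boot.
Set Implicit Arguments. Unset Strict Implicit. Unset Printing Implicit Defensive.

Definition walk {T : Type} (e : rel T) (x y : T) (n : nat) : Prop :=
  exists p : seq T, [/\ size p = n, path e x p & last x p = y].

Definition connected_graph {T : Type} (e : rel T) : Prop :=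
  forall x y : T, exists n, walk e x y n.

Definition is_dist {T : Type} (e : rel T) (x y : T) (n : nat) : Prop :=
  walk e x y n /\ forall m, walk e x y m -> n <= m.

Definition in_interval {T : Type} (e : rel T) (u v w : T) : Prop :=
  exists a b c, [/\ is_dist e u w a, is_dist e w v b, is_dist e u v c & a + b = c].

Definition median_graph {T : Type} (e : rel T) : Prop :=
  connected_graph e /\
  forall x y z : T, exists! w : T,
    [/\ in_interval e x y w, in_interval e y z w & in_interval e z x w].

Definition pt := (nat * nat * nat)%type.
Definition px (u : pt) : nat := u.1.1.
Definition py (u : pt) : nat := u.1.2.
Definition pz (u : pt) : nat := u.2.

Definition grid_adj (u w : pt) : bool :=
  [|| [&& (px u == (px w).+1) || (px w == (px u).+1), py u == py w & pz u == pz w],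
      [&& px u == px w, (py u == (py w).+1) || (py w == (py u).+1) & pz u == pz w]
    | [&& px u == px w, py u == py w & (pz u == (pz w).+1) || (pz w == (pz u).+1)]].

Section Gtilde.
Variables (k1 k2 k3 m : nat).
Variables (a1 a2 b1 b2 c1 c2 : 'I_m -> nat).

Definition in_grid (u : pt) : bool := [&& px u <= k1, py u <= k2 & pz u <= k3].

Definition in_box (i : 'I_m) (u : pt) : bool :=
  [&& a1 i <= px u <= a2 i, b1 i <= py u <= b2 i & c1 i <= pz u <= c2 i].

(* raw vertices: (u, None) is the vertex u of G, (u, Some i) is (u,i) *)
Definition gt_valid (v : pt * option 'I_m) : bool :=
  in_grid v.1 && (if v.2 is Some i then in_box i v.1 else true).

Definition gt_vertex := {v : pt * option 'I_m | gt_valid v}.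

Definition gt_adj_raw (v w : pt * option 'I_m) : bool :=
  match v.2, w.2 with
  | None, None => grid_adj v.1 w.1
  | Some i, Some j => (i == j) && grid_adj v.1 w.1
  | None, Some _ => v.1 == w.1
  | Some _, None => v.1 == w.1
  end.

Definition gt_adj : rel gt_vertex := fun v w => gt_adj_raw (sval v) (sval w).
End Gtilde.

(* Main.v *)
Require Import Defs.
From mathcomp Require Import all_boot zify.

Definition sd (a b : nat) : nat := if a == b then 0 else if a == 0 then 1 else if b == 0 then 1 else 2.
Definition smed (a b c : nat) : nat := if a == b then a else if b == c then b else if c == a then c else 0.
Lemma sd_tri a b w : sd a b <= sd a w + sd w b.
Proof. rewrite /sd. repeat (case: eqP => ?; subst => //=); lia. Qed.
Lemma sd_sym a b : sd a b = sd b a.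
Proof. rewrite /sd. repeat (case: eqP => ?; subst => //=); lia. Qed.
Lemma sd_aa a : sd a a = 0.
Proof. by rewrite /sd eqxx. Qed.
Lemma sd0 a b : sd a b = 0 -> a = b.
Proof. rewrite /sd. by case: eqP => // _; case: eqP => // _; case: eqP. Qed.
Lemma smed_uniq a b c w : sd a w + sd w b = sd a b -> sd b w + sd w c = sd b c ->
  sd c w + sd w a = sd c a -> w = smed a b c.
Proof. rewrite /sd /smed. repeat (case: eqP => ?; subst => //=); lia. Qed.
Lemma smed_btw a b c : sd a (smed a b c) + sd (smed a b c) b = sd a b.
Proof. rewrite /sd /smed. repeat case: eqP; lia. Qed.


Lemma smed_rot a b c : smed a b c = smed b c a.
Proof. rewrite /smed. repeat (case: eqP => ?; subst => //=). Qed.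

Definition lv {m} (s : option 'I_m) : nat := if s is Some i then (val i).+1 else 0.
Lemma lv_inj m : injective (@lv m).
Proof. by move=> [i|] [j|] //= [] /val_inj ->. Qed.
Definition lmed {m} (s t r : option 'I_m) := if s == t then s else if t == r then t else if r == s then r else None.
Lemma lv_med m (s t r : option 'I_m) : lv (lmed s t r) = smed (lv s) (lv t) (lv r).
Proof.
rewrite /lmed /smed !(inj_eq (@lv_inj m)).
by case: ifP => _; [|case: ifP => _; [|case: ifP]].
Qed.
Lemma lmed_some m (s t r : option 'I_m) i : lmed s t r = Some i ->
  (s = Some i /\ t = Some i) \/ (t = Some i /\ r = Some i) \/ (r = Some i /\ s = Some i).
Proof.
rewrite /lmed; case: eqP => [->|_]; [by left|]; case: eqP => [->|_]; [by right;left|].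
by case: eqP => [->|_] //; right; right.
Qed.

Definition dn (a b : nat) := (a - b) + (b - a).
Definition med3 (a b c : nat) := maxn (minn a b) (minn (maxn a b) c).

Definition Draw {m} (v w : pt * option 'I_m) : nat :=
  dn (px v.1) (px w.1) + dn (py v.1) (py w.1) + dn (pz v.1) (pz w.1) + sd (lv v.2) (lv w.2).

Lemma dn_tri0 a b w : dn a b <= dn a w + dn w b.
Proof. rewrite /dn; lia. Qed.
Lemma le4 x1 x2 x3 x4 y1 y2 y3 y4 z1 z2 z3 z4 : x1 <= y1 + z1 -> x2 <= y2 + z2 -> x3 <= y3 + z3 -> x4 <= y4 + z4 ->
  x1 + x2 + x3 + x4 <= (y1 + y2 + y3 + y4) + (z1 + z2 + z3 + z4).
Proof. lia. Qed.
Lemma Draw_tri m (u v w : pt * option 'I_m) : Draw u w <= Draw u v + Draw v w.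
Proof. apply: le4; [exact: dn_tri0|exact: dn_tri0|exact: dn_tri0|exact: sd_tri]. Qed.
Lemma Draw_sym m (u v : pt * option 'I_m) : Draw u v = Draw v u.
Proof. rewrite /Draw /dn sd_sym. lia. Qed.
Lemma Draw_aa m (u : pt * option 'I_m) : Draw u u = 0.
Proof. rewrite /Draw /dn sd_aa. lia. Qed.
Lemma Draw0 m (u v : pt * option 'I_m) : Draw u v = 0 -> u = v.
Proof.
case: u => [[[x y] z] s]; case: v => [[[x' y'] z'] s']; rewrite /Draw /dn /px /py /pz /= => H.
have /sd0/lv_inj -> : sd (lv s) (lv s') = 0 by lia.
have -> : x = x' by lia. have -> : y = y' by lia. have -> : z = z' by lia. done.
Qed.

Lemma adj_Draw m (u v : pt * option 'I_m) : gt_adj_raw u v -> Draw u v = 1.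
Proof.
case: u => [[[x y] z] [s|]]; case: v => [[[x' y'] z'] [s'|]];
  rewrite /gt_adj_raw /Draw /dn /grid_adj /px /py /pz /=.
- by case/andP => /eqP -> H; rewrite sd_aa; lia.
- by move/eqP => [-> -> ->]; rewrite /sd /=; lia.
- by move/eqP => [-> -> ->]; rewrite /sd /=; lia.
- by rewrite sd_aa; lia.
Qed.

Definition btw a b c := minn a b <= c <= maxn a b.

Lemma grid_step (u w : pt) : 0 < dn (px u) (px w) + dn (py u) (py w) + dn (pz u) (pz w) ->
  exists u', [/\ grid_adj u u',
     dn (px u') (px w) + dn (py u') (py w) + dn (pz u') (pz w) =
     (dn (px u) (px w) + dn (py u) (py w) + dn (pz u) (pz w)).-1 ,
     btw (px u) (px w) (px u'), btw (py u) (py w) (py u') & btw (pz u) (pz w) (pz u')].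
Proof.
case: u => [[x y] z]; case: w => [[x' y'] z']; rewrite /dn /btw /grid_adj /px /py /pz /= => H.
case: (ltngtP x x') => Hx.
- exists (x.+1, y, z); rewrite /=; split; lia.
- exists (x.-1, y, z); rewrite /=; split; lia.
case: (ltngtP y y') => Hy.
- exists (x, y.+1, z); rewrite /=; split; lia.
- exists (x, y.-1, z); rewrite /=; split; lia.
case: (ltngtP z z') => Hz.
- exists (x, y, z.+1); rewrite /=; split; lia.
- exists (x, y, z.-1); rewrite /=; split; lia.
lia.
Qed.
Arguments Draw_tri {m}. Arguments Draw_sym {m}. Arguments Draw_aa {m}. Arguments Draw0 {m}.
Arguments adj_Draw {m}. Arguments lv_med {m}. Arguments lmed_some {m}.
Lemma dn_tri a b w : dn a b <= dn a w + dn w b.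
Proof. rewrite /dn; lia. Qed.
Lemma med3_btw a b c : dn a (med3 a b c) + dn (med3 a b c) b = dn a b.
Proof. rewrite /dn /med3; case: (leqP a b) => ?; case: (leqP b c)=> ?; case: (leqP a c) => ?; lia. Qed.
Lemma med3_rot a b c : med3 a b c = med3 b c a.
Proof. rewrite /med3; case: (leqP a b) => ?; case: (leqP b c)=> ?; case: (leqP a c) => ?; lia. Qed.
Lemma med3_uniq a b c w : dn a w + dn w b = dn a b -> dn b w + dn w c = dn b c ->
  dn c w + dn w a = dn c a -> w = med3 a b c.
Proof. rewrite /dn /med3; case: (leqP a b) => ?; case: (leqP b c)=> ?; case: (leqP a c) => ?; lia. Qed.
Lemma med3_le a b c k : a <= k -> b <= k -> c <= k -> med3 a b c <= k.
Proof. rewrite /med3; case: (leqP a b) => ?; case: (leqP b c)=> ?; case: (leqP a c) => ?; lia. Qed.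
Lemma med3_in lo hi a b c : lo <= a <= hi -> lo <= b <= hi -> lo <= med3 a b c <= hi.
Proof. rewrite /med3; case: (leqP a b) => ?; case: (leqP b c)=> ?; case: (leqP a c) => ?; lia. Qed.
Lemma tri_step a b c n : a <= b + c -> b = 1 -> c <= n -> a <= n.+1.
Proof. lia. Qed.
Lemma eq4 x1 x2 x3 x4 y1 y2 y3 y4 z1 z2 z3 z4 : y1 + z1 = x1 -> y2 + z2 = x2 -> y3 + z3 = x3 -> y4 + z4 = x4 ->
  (y1 + y2 + y3 + y4) + (z1 + z2 + z3 + z4) = x1 + x2 + x3 + x4.
Proof. lia. Qed.
Lemma split4 x1 x2 x3 x4 y1 y2 y3 y4 z1 z2 z3 z4 : x1 <= y1 + z1 -> x2 <= y2 + z2 -> x3 <= y3 + z3 -> x4 <= y4 + z4 ->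
  (y1 + y2 + y3 + y4) + (z1 + z2 + z3 + z4) = x1 + x2 + x3 + x4 ->
  [/\ y1 + z1 = x1, y2 + z2 = x2, y3 + z3 = x3 & y4 + z4 = x4].
Proof. move=> *; split; lia. Qed.


Section S.
Variables (k1 k2 k3 m : nat) (a1 a2 b1 b2 c1 c2 : 'I_m -> nat).
Local Notation valid := (gt_valid k1 k2 k3 a1 a2 b1 b2 c1 c2).

Lemma step_raw (v w : pt * option 'I_m) : valid v -> valid w -> 0 < Draw v w ->
  exists v', [/\ valid v', gt_adj_raw v v' & Draw v' w = (Draw v w).-1].
Proof.
case: v => u s; case: w => w t; rewrite /Draw /=; move: s t.
have Hg : forall s, 0 < dn (px u) (px w) + dn (py u) (py w) + dn (pz u) (pz w) ->
    valid (u, s) -> valid (w, s) ->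
    exists v', [/\ valid v', gt_adj_raw (u, s) v' & Draw v' (w, s) =
       (dn (px u) (px w) + dn (py u) (py w) + dn (pz u) (pz w) + sd (lv s) (lv s)).-1].
  move=> s H Vu Vw; have [u' [A B C D E]] := @grid_step u w H.
  exists (u', s); split.
  - move: Vu Vw C D E; rewrite /gt_valid /in_grid /in_box /btw /=.
    by case: s => [i|] /=; lia.
  - by move: Vu Vw; case: s => [i|] _ _; rewrite /gt_adj_raw /= ?eqxx.
  - by rewrite /Draw /= B sd_aa !addn0.
move=> [i|] [j|].
- case: (eqVneq i j) => [<-|ne] Vu Vw H.
    by apply: Hg; rewrite // sd_aa addn0 in H.
  exists (u, None); split.
  + by move: Vu; rewrite /gt_valid /= andbT => /andP[].
  + by rewrite /gt_adj_raw /= ?eqxx.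
  + rewrite /Draw /= /sd /=. have : (val i == val j) = false.
      by apply/negbTE; move: ne; apply: contra => /eqP /val_inj ->.
    move=> E; rewrite eqSS E; lia.
- move=> Vu Vw H; exists (u, None); split.
  + by move: Vu; rewrite /gt_valid /= andbT => /andP[].
  + by rewrite /gt_adj_raw /= ?eqxx.
  + rewrite /Draw /= /sd /=; lia.
- move=> Vu Vw H.
  case: (eqVneq u w) => [E|ne]; first subst w.
    exists (u, Some j); split.
    + move: Vu Vw; rewrite /gt_valid /= andbT => _ //.
    + by rewrite /gt_adj_raw /= ?eqxx.
    + rewrite /Draw /= sd_aa /dn /sd /=; lia.
  have H0 : 0 < dn (px u) (px w) + dn (py u) (py w) + dn (pz u) (pz w).
    move: ne; case: u {Vu H Hg} => [[x y] z]; case: w {Vw} => [[x' y'] z'].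
    rewrite /dn /px /py /pz /= => ne.
    case: (ltngtP x x') => ?; try lia. case: (ltngtP y y') => ?; try lia.
    case: (ltngtP z z') => ?; try lia. by subst; rewrite eqxx in ne.
  have [u' [A B C D E]] := @grid_step u w H0.
  exists (u', None); split.
  + move: Vu C D E; rewrite /gt_valid /in_grid /btw /=. move: Vw; rewrite /gt_valid /in_grid /=. lia.
  + by [].
  + rewrite /Draw /= B /sd /=. lia.
- move=> Vu Vw H. by apply: Hg; rewrite // sd_aa addn0 in H.
Qed.
End S.


Section S.
Variables (k1 k2 k3 m : nat) (a1 a2 b1 b2 c1 c2 : 'I_m -> nat).
Local Notation valid := (gt_valid k1 k2 k3 a1 a2 b1 b2 c1 c2).
Local Notation V := (gt_vertex k1 k2 k3 a1 a2 b1 b2 c1 c2).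
Local Notation e := (@gt_adj k1 k2 k3 m a1 a2 b1 b2 c1 c2).
Definition D (x y : V) := Draw (sval x) (sval y).

Lemma walk_ge (x y : V) n : walk e x y n -> D x y <= n.
Proof.
case=> p [<- Hp <-] {n}; elim: p x Hp => [|x' p IH] x /=.
  by rewrite /D Draw_aa.
case/andP=> Ha Hp.
rewrite /D. apply: (@tri_step _ _ _ _ (Draw_tri (sval x) (sval x') (sval (last x' p))) (adj_Draw (sval x) (sval x') Ha)); exact: IH.
Qed.

Lemma walk_ex n (x y : V) : D x y = n -> walk e x y n.
Proof.
elim: n x => [|n IH] x H.
  have E : x = y by apply/val_inj/Draw0.
  by subst; exists [::].
have H0 : 0 < Draw (sval x) (sval y) by move: H; rewrite /D => ->.
have [v' [Hv Ha Hd]] := @step_raw k1 k2 k3 m a1 a2 b1 b2 c1 c2 _ _ (proj2_sig x) (proj2_sig y) H0.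
have [p [Hs Hp Hl]] := IH (exist _ v' Hv) (ltac:(rewrite /D /= Hd -/(D x y) H //)).
exists (exist _ v' Hv :: p); split => //=; first by rewrite Hs.
by rewrite Hp andbT.
Qed.

Lemma is_dist_iff (x y : V) n : is_dist e x y n <-> n = D x y.
Proof.
split.
  case=> W H; apply/eqP; rewrite eqn_leq (walk_ge _ _ _ W) andbT.
  exact: H _ (walk_ex _ _ _ (erefl (D x y))).
move=> ->; split; [exact: walk_ex | exact: walk_ge].
Qed.

Lemma in_interval_iff (x y w : V) : in_interval e x y w <-> D x w + D w y = D x y.
Proof.
split.
  by case=> a [b [c [/is_dist_iff -> /is_dist_iff -> /is_dist_iff -> <-]]].
move=> H; exists (D x w), (D w y), (D x y); split => //; exact/is_dist_iff.
Qed.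

Definition medpt (u v w : pt) : pt :=
  (med3 (px u) (px v) (px w), med3 (py u) (py v) (py w), med3 (pz u) (pz v) (pz w)).
Definition medraw (u v w : pt * option 'I_m) : pt * option 'I_m :=
  (medpt u.1 v.1 w.1, lmed u.2 v.2 w.2).

Lemma medpt_rot u v w : medpt u v w = medpt v w u.
Proof. by rewrite /medpt (med3_rot (px u)) (med3_rot (py u)) (med3_rot (pz u)). Qed.

Lemma in_grid_med u v w : in_grid k1 k2 k3 u -> in_grid k1 k2 k3 v -> in_grid k1 k2 k3 w ->
  in_grid k1 k2 k3 (medpt u v w).
Proof.
rewrite /in_grid => /and3P[? ? ?] /and3P[? ? ?] /and3P[? ? ?].
by apply/and3P; split; apply: med3_le.
Qed.

Lemma in_box_med i u v w : in_box a1 a2 b1 b2 c1 c2 i u -> in_box a1 a2 b1 b2 c1 c2 i v ->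
  in_box a1 a2 b1 b2 c1 c2 i (medpt u v w).
Proof.
rewrite /in_box => /and3P[? ? ?] /and3P[? ? ?].
by apply/and3P; split; apply: med3_in.
Qed.

Lemma medraw_valid u v w : valid u -> valid v -> valid w -> valid (medraw u v w).
Proof.
case: u => u s; case: v => v t; case: w => w r.
rewrite /gt_valid /medraw /= => /andP[Gu Bu] /andP[Gv Bv] /andP[Gw Bw].
rewrite in_grid_med //=.
case E: (lmed s t r) => [i|] //.
case: (lmed_some _ _ _ _ E) => [[Es Et]|[[Et Er]|[Er Es]]].
- by move: Bu Bv; rewrite Es Et; apply: in_box_med.
- by rewrite medpt_rot; move: Bv Bw; rewrite Et Er; apply: in_box_med.
- by rewrite -medpt_rot; move: Bw Bu; rewrite Er Es; apply: in_box_med.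
Qed.

Lemma medraw_btw (u v w : pt * option 'I_m) :
  Draw u (medraw u v w) + Draw (medraw u v w) v = Draw u v.
Proof.
rewrite /Draw /medraw /=; apply: eq4; try exact: med3_btw.
rewrite lv_med; exact: smed_btw.
Qed.

Lemma medraw_rot (u v w : pt * option 'I_m) : medraw u v w = medraw v w u.
Proof.
rewrite /medraw. have: lmed u.2 v.2 w.2 = lmed v.2 w.2 u.2.
  by apply: (@lv_inj m); rewrite !lv_med smed_rot.
by move=> ->; rewrite medpt_rot.
Qed.

Lemma medraw_uniq (u v w z : pt * option 'I_m) :
  Draw u z + Draw z v = Draw u v -> Draw v z + Draw z w = Draw v w ->
  Draw w z + Draw z u = Draw w u -> z = medraw u v w.
Proof.
move=> E1 E2 E3.
have [X1 Y1 Z1 L1] := @split4 _ _ _ _ _ _ _ _ _ _ _ _ (dn_tri0 _ _ _) (dn_tri0 _ _ _) (dn_tri0 _ _ _) (sd_tri _ _ _) E1.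
have [X2 Y2 Z2 L2] := @split4 _ _ _ _ _ _ _ _ _ _ _ _ (dn_tri0 _ _ _) (dn_tri0 _ _ _) (dn_tri0 _ _ _) (sd_tri _ _ _) E2.
have [X3 Y3 Z3 L3] := @split4 _ _ _ _ _ _ _ _ _ _ _ _ (dn_tri0 _ _ _) (dn_tri0 _ _ _) (dn_tri0 _ _ _) (sd_tri _ _ _) E3.
have L : z.2 = lmed u.2 v.2 w.2.
  by apply: (@lv_inj m); rewrite lv_med; apply: smed_uniq.
have Lx := @med3_uniq _ _ _ _ X1 X2 X3.
have Ly := @med3_uniq _ _ _ _ Y1 Y2 Y3.
have Lz := @med3_uniq _ _ _ _ Z1 Z2 Z3.
rewrite /medraw /medpt -L -Lx -Ly -Lz.
by case: z {E1 E2 E3 X1 Y1 Z1 L1 X2 Y2 Z2 L2 X3 Y3 Z3 L3 L Lx Ly Lz} => [[[x y] zz] s].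
Qed.

End S.
Arguments D {k1 k2 k3 m a1 a2 b1 b2 c1 c2}.
Arguments walk_ex {k1 k2 k3 m a1 a2 b1 b2 c1 c2}.
Arguments in_interval_iff {k1 k2 k3 m a1 a2 b1 b2 c1 c2}.
Arguments medraw_valid {k1 k2 k3 m a1 a2 b1 b2 c1 c2 u v w}.
Arguments medraw {m}. Arguments medraw_btw {m}. Arguments medraw_rot {m}. Arguments medraw_uniq {m}.


Theorem lemma1 (k1 k2 k3 m : nat) (a1 a2 b1 b2 c1 c2 : 'I_m -> nat) :
  1 <= k1 -> 1 <= k2 -> 1 <= k3 ->
  (forall i, a1 i < a2 i <= k1) ->
  (forall i, b1 i < b2 i <= k2) ->
  (forall i, c1 i < c2 i <= k3) ->
  median_graph (@gt_adj k1 k2 k3 m a1 a2 b1 b2 c1 c2).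
Proof.
move=> _ _ _ _ _ _; split.
  by move=> x y; exists (D x y); apply: walk_ex.
move=> x y z.
pose M := exist (fun v => gt_valid k1 k2 k3 a1 a2 b1 b2 c1 c2 v)
  (medraw (sval x) (sval y) (sval z))
  (medraw_valid (proj2_sig x) (proj2_sig y) (proj2_sig z)).
exists M; split.
  split; apply/in_interval_iff; rewrite /D /=.
  - exact: medraw_btw.
  - by rewrite medraw_rot medraw_btw.
  - by rewrite -medraw_rot medraw_btw.
move=> w [/in_interval_iff H1 /in_interval_iff H2 /in_interval_iff H3].
apply: val_inj => /=; symmetry; exact: medraw_uniq.
Qed.
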